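(* Consider the decentralized Bayesian bandit algorithm described in the context with Gaussian rewards of known variance $\sigma^2$, learning rate $\eta>0$ and prior $\mathcal N(\mu_0,\sigma_0^2)$ on the mean of every arm at every agent. Define $\mu^{(i)}_k(1)=\mu_0$, $\sigma^{(i)}_k(1)=\sigma_0$ and, for $t\ge1$, \[ \tilde\sigma^{(i)}_k(t+1)=\left(\frac{1}{(\sigma^{(i)}_k(t))^2}+\frac{\eta\mathbf 1\{A^{(i)}_t=k\}}{\sigma^2}\right)^{-1/2}, \] \[ \tilde\mu^{(i)}_k(t+1)=\mu^{(i)}_k(t)\left(\frac{\tilde\sigma^{(i)}_k(t+1)}{\sigma^{(i)}_k(t)}\right)^2+\eta Y^{(i)}_t\mathbf 1\{A^{(i)}_t=k\}\left(\frac{\tilde\sigma^{(i)}_k(t+1)}{\sigma}\right)^2, \] \[ \frac{1}{(\sigma^{(i)}_k(t+1))^2}=\sum_{j=1}^N W_{ij}\frac{1}{(\tilde\sigma^{(j)}_k(t+1))^2},\qquad \frac{\mu^{(i)}_k(t+1)}{(\sigma^{(i)}_k(t+1))^2}=\sum_{j=1}^N W_{ij}\frac{\tilde\mu^{(j)}_k(t+1)}{(\tilde\sigma^{(j)}_k(t+1))^2}. \] Then for all $t\ge1$, $i\in[N]$, $k\in[K]$: $\tilde q^{(i)}_{k,t+1}$ is the density of $\mathcal N(\tilde\mu^{(i)}_k(t+1),(\tilde\sigma^{(i)}_k(t+1))^2)$ and $q^{(i)}_{k,t+1}$ is the density of $\mathcal N(\mu^{(i)}_k(t+1),(\sigma^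{(i)}_k(t+1))^2)$.
   Context: $N$ agents; $W\in\mathbb R^{N\times N}$ is a doubly stochastic matrix with nonnegative entries (respecting a connected undirected communication graph). $K$ arms; when agent $i$ plays arm $k$ it observes a reward drawn from $\mathcal N(\theta^*_k,\sigma^2)$ with $\sigma^2$ known. Let $p_\theta$ be the $\mathcal N(\theta,\sigma^2)$ density, $\Theta=\mathbb R$ with Lebesgue measure. Decentralized Bayesian bandit algorithm: each agent $i$ maintains densities $q^{(i)}_{k,t}$, $k\in[K]$, with $q^{(i)}_{k,1}$ equal to the prior density. In round $t$, agent $i$ selects an arm $A^{(i)}_t$ as a function of $(q^{(i)}_{1,t},\dots,q^{(i)}_{K,t})$, observes reward $Y^{(i)}_t$, and forms the tempered posterior $\tilde q^{(i)}_{k,t+1}(\theta)=\frac{q^{(i)}_{k,t}(\theta)p_\theta(Y^{(i)}_t)^\eta}{\int_\Theta q^{(i)}_{k,t}(\phi)p_\phi(Y^{(i)}_t)^\eta d\phi}$ for $k=A^{(i)}_t$, and $\tilde q^{(i)}_{k,t+1}=q^{(i)}_{k,t}$ for $k\neq A^{(i)}_t$. After exchanging with neighbors, each agent sets $q^{(i)}_{k,t+1}(\theta)=\frac{\exp(\sum_{j=1}^N W_{ij}\log\tilde q^{(j)}_{k,t+1}(\theta))}{\int_\Theta\exp(\sum_{j=1}^N W_{ij}\log\tilde q^{(j)}_{k,t+1}(\phi))d\phi}$ for all $k$. *)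

(* Defs.v *)
From HB Require Import structures.
From mathcomp Require Import all_boot all_order all_algebra.
From mathcomp Require Import all_classical all_reals all_analysis.
Set Implicit Arguments. Unset Strict Implicit. Unset Printing Implicit Defensive.
Import Order.TTheory GRing.Theory Num.Theory.
Local Open Scope ring_scope.

Section DecBandit.
Variables (R : realType) (N K : nat).

(* State of the algorithm: q i k is the density q^{(i)}_{k} on Theta = R. *)
Definition state := 'I_N -> 'I_K -> R -> R.

Definition normalize (f : R -> R) : R -> R :=
  fun th => f th / Rintegral (@lebesgue_measure R) setT f.

Variables (W : 'M[R]_N) (sigma eta : R)
  (pol : nat -> 'I_N -> ('I_K -> R -> R) -> 'I_K)
  (Y : nat -> 'I_N -> R) (prior : R -> R).

Definition arm (t : nat) (q : state) (i : 'I_N) : 'I_K := pol t i (q i).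

(* tempered posterior \tilde q_{t+1} computed from q = q_t *)
Definition qtilde (t : nat) (q : state) : state := fun i k =>
  if k == arm t q i then
    normalize (fun th => q i k th * powR (normal_pdf th sigma (Y t i)) eta)
  else q i k.

(* geometric averaging step: q_{t+1} computed from q = q_t *)
Definition qnext (t : nat) (q : state) : state := fun i k =>
  normalize (fun th => expR (\sum_(j < N) W i j * ln (qtilde t q j k th))).

(* qseq t = q_t for t >= 1 (qseq 0 is an unused dummy, set to the prior) *)
Fixpoint qseq (t : nat) : state :=
  match t with
  | 0 => fun _ _ => prior
  | t'.+1 => if t' is 0 then fun _ _ => prior else qnext t' (qseq t')
  end.

(* parameters: (mu^{(i)}_k(t), sigma^{(i)}_k(t)) *)
Definition param : Type := (('I_N -> 'I_K -> R) * ('I_N -> 'I_K -> R))%type.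

Variables (mu0 sigma0 : R).

Definition ind (b : bool) : R := if b then 1 else 0.

(* \tilde sigma(t+1) from sigma(t) *)
Definition sigtil (t : nat) (p : param) : 'I_N -> 'I_K -> R := fun i k =>
  powR ((p.2 i k) ^-2 + eta * ind (arm t (qseq t) i == k) / sigma ^+ 2) (- 2^-1).

(* \tilde mu(t+1) from mu(t), sigma(t) *)
Definition mutil (t : nat) (p : param) : 'I_N -> 'I_K -> R := fun i k =>
  p.1 i k * (sigtil t p i k / p.2 i k) ^+ 2
  + eta * Y t i * ind (arm t (qseq t) i == k) * (sigtil t p i k / sigma) ^+ 2.

Definition param_next (t : nat) (p : param) : param :=
  let s := fun i k => powR (\sum_(j < N) W i j * (sigtil t p j k) ^-2) (- 2^-1) in
  (fun i k => (s i k) ^+ 2 * \sum_(j < N) W i j * (mutil t p j k / (sigtil t p j k) ^+ 2),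
   s).

(* pseq t = (mu(t), sigma(t)) for t >= 1 *)
Fixpoint pseq (t : nat) : param :=
  match t with
  | 0 => (fun _ _ => mu0, fun _ _ => sigma0)
  | t'.+1 => if t' is 0 then (fun _ _ => mu0, fun _ _ => sigma0)
             else param_next t' (pseq t')
  end.

End DecBandit.

Definition respects_graph (R : realType) (N : nat) (W : 'M[R]_N) (G : rel 'I_N) :=
  (forall i j, 0 <= W i j) /\
  (forall i, \sum_(j < N) W i j = 1) /\
  (forall j, \sum_(i < N) W i j = 1) /\
  (forall i j, i != j -> W i j != 0 -> G i j) /\
  symmetric G /\ (forall i j, connect G i j).

(* Main.v *)
Require Import Defs.
From HB Require Import structures.
From mathcomp Require Import all_boot all_order all_algebra.
From mathcomp Require Import all_classical all_reals all_analysis.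
From mathcomp Require Import ring lra.
Import Order.TTheory GRing.Theory Num.Theory.
Local Open Scope ring_scope.
Lemma sq_powR (R : realType) (A : R) : 0 < A -> (powR A (- 2^-1)) ^+ 2 = A^-1.
Proof.
move=> A0; rewrite -powR_mulrn ?powR_ge0// -powRrM.
have -> : - 2^-1 * 2%:R = -1 :> R by field.
by rewrite powR_inv1 // ltW.
Qed.

Lemma gauss_norm (R : realType) (f : R -> R) (c0 A B : R) : 0 < A ->
  (forall th, f th = expR (c0 - (A * th^+2 - 2 * B * th) / 2)) ->
  forall th, normalize f th = normal_pdf (B / A) (powR A (-2^-1)) th.
Proof.
move=> A0 hf.
set s := powR A (-2^-1).
have s0 : 0 < s by apply: powR_gt0.
have s2 : s ^+ 2 = A^-1 by apply: sq_powR.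
have sn0 : s != 0 by rewrite gt_eqF.
have pk := normal_peak_gt0 sn0.
set C := expR (c0 + B^+2 / (2 * A)) / normal_peak s.
have C0 : 0 < C by rewrite divr_gt0// expR_gt0.
have fE : f = fun th => C * normal_pdf (B / A) s th.
  apply/funext => th; rewrite hf normal_pdfE// /normal_fun /C /=.
  rewrite [RHS]mulrA divfK ?gt_eqF// -expRD; congr expR.
  rewrite s2 -mulr_natr; field; by rewrite gt_eqF.
move=> th; rewrite /normalize fE RintegralZl//; last exact: integrable_normal_pdf.
rewrite /Rintegral integral_normal_pdf /= mulr1 mulrC mulrA mulVf ?mul1r// gt_eqF//.
Qed.

Lemma pdf_exp (R : realType) (m s x : R) : 0 < s ->
  normal_pdf m s x = expR (ln (normal_peak s) - (x - m)^+2 / (s^+2 * 2)).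
Proof.
move=> s0; rewrite normal_pdfE ?gt_eqF// /normal_fun /= expRD lnK; last first.
  by rewrite posrE normal_peak_gt0 ?gt_eqF.
by rewrite mulNr mulr_natr.
Qed.

Lemma powR_expR (R : realType) (u e : R) : powR (expR u) e = expR (e * u).
Proof. by rewrite /powR gt_eqF ?expR_gt0// expRK. Qed.

Lemma powR_sq_inv (R : realType) (s : R) : 0 < s -> powR (s ^-2) (- 2^-1) = s.
Proof.
move=> s0.
have h := @sq_powR R (s ^-2).
rewrite -[LHS]ger0_norm ?powR_ge0// -sqrtr_sqr h ?invr_gt0 ?exprn_gt0// invrK.
by rewrite sqrtr_sqr gtr0_norm.
Qed.
Lemma alg1 (R : realType) (a b e s sg m y x : R) : s != 0 -> sg != 0 ->
 a - (x - m)^+2/(s^+2*2) + e*(b - (y-x)^+2/(sg^+2*2)) = a + e*b - m^+2/(2*s^+2) - e*y^+2/(2*sg^+2) - ((s^-2 + e * 1/sg^+2)*x^+2 - 2*(m/s^+2 + e*y/sg^+2)*x)/2.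
Proof. move=> s0 g0. field. by rewrite s0 g0. Qed.
Lemma alg2 (R : realType) (e s sg m y S : R) : s != 0 -> sg != 0 ->
  0 < e -> S ^+ 2 = (s ^-2 + e * 1 / sg^+2)^-1 ->
  (m / s^+2 + e * y / sg^+2) / (s ^-2 + e * 1 / sg^+2) = m * (S / s)^+2 + e * y * 1 * (S / sg)^+2.
Proof. move=> s0 g0 e0 hS. rewrite !exprMn hS. field.
have h1 : 0 <= e * s^+2 by apply: mulr_ge0; [exact: ltW | exact: sqr_ge0].
have h2 : 0 < sg^+2 by rewrite lt_def sqrf_eq0 g0 sqr_ge0.
by rewrite s0 g0 /= gt_eqF // ltr_wpDr.
Qed.
Lemma alg3 (R : realType) (n : nat) (w a m s : 'I_n -> R) (x : R) :
  (forall j, s j != 0) ->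
  \sum_(j < n) w j * (a j - (x - m j)^+2 / (s j ^+ 2 * 2)) =
  \sum_(j < n) w j * (a j - m j ^+2 / (2 * s j ^+ 2))
  - ((\sum_(j < n) w j * s j ^-2) * x ^+ 2 - 2 * (\sum_(j < n) w j * (m j / s j ^+ 2)) * x) / 2.
Proof.
move=> hs.
rewrite !mulr_suml mulr_sumr !mulr_suml -!sumrB mulr_suml -sumrB.
apply: eq_bigr => j _.
have := hs j; move: (s j) (w j) (a j) (m j) => sj wj aj mj h.
field; by rewrite h.
Qed.

Section Main.
Variables (R : realType) (N K : nat) (W : 'M[R]_N) (sigma eta mu0 sigma0 : R)
  (pol : nat -> 'I_N -> ('I_K -> R -> R) -> 'I_K) (Y : nat -> 'I_N -> R).
Hypotheses (hW : forall i j, 0 <= W i j) (hrow : forall i, \sum_(j < N) W i j = 1)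
  (hsig : 0 < sigma) (heta : 0 < eta) (hs0 : 0 < sigma0).
Local Notation prior := (normal_pdf mu0 sigma0).
Local Notation qs := (qseq W sigma eta pol Y prior).
Local Notation ps := (pseq W sigma eta pol Y prior mu0 sigma0).
Local Notation st := (sigtil W sigma eta pol Y prior).
Local Notation mt := (mutil W sigma eta pol Y prior).

Lemma part1a t i k (p : param R N K) : 0 < p.2 i k -> 0 < st t p i k.
Proof.
move=> hs; apply: powR_gt0.
have h1 : 0 < (p.2 i k)^-2 by rewrite invr_gt0 exprn_gt0.
have h2 : 0 <= eta * ind R (arm pol t (qs t) i == k) / sigma ^+ 2.
  apply: divr_ge0; last exact: sqr_ge0.
  apply: mulr_ge0; first exact: ltW.
  by rewrite /ind; case: (_ == _).
lra.
Qed.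

Lemma part1b t i k (p : param R N K) :
  (forall th, qs t i k th = normal_pdf (p.1 i k) (p.2 i k) th) -> 0 < p.2 i k ->
  arm pol t (qs t) i != k -> 
  (forall th, qtilde sigma eta pol Y t (qs t) i k th = normal_pdf (mt t p i k) (st t p i k) th).
Proof.
move=> hq hs /negbTE hk.
rewrite /qtilde /mt /mutil /st /sigtil eq_sym hk /ind.
move=> th; rewrite mulr0 mul0r addr0 powR_sq_inv// mulr0 mul0r addr0 divff ?gt_eqF//.
by rewrite expr1n mulr1 hq.
Qed.

Lemma part1c t i k (p : param R N K) :
  (forall th, qs t i k th = normal_pdf (p.1 i k) (p.2 i k) th) -> 0 < p.2 i k ->
  arm pol t (qs t) i = k ->
  (forall th, qtilde sigma eta pol Y t (qs t) i k th = normal_pdf (mt t p i k) (st t p i k) th).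
Proof.
move=> hq hs hk.
rewrite /qtilde /mt /mutil /st /sigtil hk eqxx /ind.
have A0 : 0 < (p.2 i k) ^-2 + eta * 1 / sigma ^+ 2.
  by rewrite mulr1 addr_gt0 ?divr_gt0 ?invr_gt0 ?exprn_gt0.
have h1 : sigma != 0 by rewrite gt_eqF.
have h2 : p.2 i k != 0 by rewrite gt_eqF.
move=> th.
rewrite (@gauss_norm _ _ (ln (normal_peak (p.2 i k)) + eta * ln (normal_peak sigma)
   - (p.1 i k)^+2 / (2 * (p.2 i k)^+2) - eta * (Y t i)^+2 / (2 * sigma^+2)) _
   ((p.1 i k) / (p.2 i k)^+2 + eta * (Y t i) / sigma^+2) A0); last first.
  move=> x; rewrite hq !pdf_exp// powR_expR -expRD; congr expR.
  exact: (@alg1 R (ln (normal_peak (p.2 i k))) (ln (normal_peak sigma)) eta (p.2 i k) sigma (p.1 i k) (Y t i) x h2 h1).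
by rewrite (@alg2 R eta (p.2 i k) sigma (p.1 i k) (Y t i) _ h2 h1 heta (@sq_powR R _ A0)).
Qed.

Lemma sum_pos i (f : 'I_N -> R) : (forall j, 0 < f j) -> 0 < \sum_(j < N) W i j * f j.
Proof.
move=> hf.
have ge : 0 <= \sum_(j < N) W i j * f j.
  by apply: sumr_ge0 => j _; apply: mulr_ge0; [exact: hW | exact: ltW].
rewrite lt_def ge andbT; apply/eqP => h0.
have h := psumr_eq0P (fun j _ => mulr_ge0 (hW i j) (ltW (hf j))) h0.
have := hrow i; rewrite big1 => [/esym/eqP|j _]; first by rewrite oner_eq0.
by have /eqP := h j isT; rewrite mulf_eq0 (gt_eqF (hf j)) orbF => /eqP.
Qed.

Lemma qseqS t : (1 <= t)%N -> qs t.+1 = qnext W sigma eta pol Y t (qs t).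
Proof. by case: t. Qed.

Lemma pseqS t : (1 <= t)%N -> ps t.+1 = param_next W sigma eta pol Y prior t (ps t).
Proof. by case: t. Qed.

Lemma part2 t (p : param R N K) :
  (forall j k th, qtilde sigma eta pol Y t (qs t) j k th = normal_pdf (mt t p j k) (st t p j k) th) ->
  (forall j k, 0 < st t p j k) ->
  forall i k, (forall th, qnext W sigma eta pol Y t (qs t) i k th =
     normal_pdf ((param_next W sigma eta pol Y prior t p).1 i k)
                ((param_next W sigma eta pol Y prior t p).2 i k) th)
   /\ 0 < (param_next W sigma eta pol Y prior t p).2 i k.
Proof.
move=> hq hs i k.
have A0 : 0 < \sum_(j < N) W i j * (st t p j k) ^-2.
  by apply: sum_pos => j; rewrite invr_gt0 exprn_gt0.
split; last by apply: powR_gt0.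
move=> th; rewrite /qnext.
have hl : forall x j, ln (qtilde sigma eta pol Y t (qs t) j k x) =
   ln (normal_peak (st t p j k)) - (x - mt t p j k)^+2 / ((st t p j k)^+2 * 2).
  by move=> x j; rewrite hq pdf_exp // expRK.
have hsn : forall j, st t p j k != 0 by move=> j; rewrite gt_eqF.
rewrite (@gauss_norm _ _ (\sum_(j < N) W i j * (ln (normal_peak (st t p j k)) - (mt t p j k)^+2 / (2 * (st t p j k)^+2))) _
   (\sum_(j < N) W i j * (mt t p j k / (st t p j k)^+2)) A0); last first.
  move=> x; congr expR.
  under eq_bigr do rewrite hl.
  exact: (@alg3 R N (W i) (fun j => ln (normal_peak (st t p j k))) (fun j => mt t p j k) (fun j => st t p j k) x hsn).
by rewrite /param_next /= (@sq_powR R _ A0) mulrC.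
Qed.

Lemma part1 t i k (p : param R N K) :
  (forall th, qs t i k th = normal_pdf (p.1 i k) (p.2 i k) th) -> 0 < p.2 i k ->
  forall th, qtilde sigma eta pol Y t (qs t) i k th = normal_pdf (mt t p i k) (st t p i k) th.
Proof.
move=> hq hs; case: (eqVneq (arm pol t (qs t) i) k) => h.
  exact: part1c.
exact: part1b.
Qed.

Lemma invariant t : (1 <= t)%N ->
  (forall i k th, qs t i k th = normal_pdf ((ps t).1 i k) ((ps t).2 i k) th) /\ (forall i k, 0 < (ps t).2 i k).
Proof.
elim: t => [//|t IH] ht.
case: t IH ht => [_ _|t IH _]; first by split.
have [hq hp] := IH isT.
have h1 : forall j k th, qtilde sigma eta pol Y t.+1 (qs t.+1) j k th =
    normal_pdf (mt t.+1 (ps t.+1) j k) (st t.+1 (ps t.+1) j k) th.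
  by move=> j k; apply: part1.
have h2 : forall j k, 0 < st t.+1 (ps t.+1) j k by move=> j k; apply: part1a.
rewrite qseqS // pseqS //; split => i k; have [] := part2 _ _ h1 h2 i k => //.
Qed.
End Main.

Theorem lemma2 (R : realType) (N K : nat) (W : 'M[R]_N) (G : rel 'I_N)
  (sigma eta mu0 sigma0 : R)
  (pol : nat -> 'I_N -> ('I_K -> R -> R) -> 'I_K) (Y : nat -> 'I_N -> R) :
  respects_graph W G -> 0 < sigma -> 0 < eta -> 0 < sigma0 ->
  let prior := normal_pdf mu0 sigma0 in
  forall (t : nat) (i : 'I_N) (k : 'I_K), (1 <= t)%N ->
    let q := qseq W sigma eta pol Y prior t in
    let p := pseq W sigma eta pol Y prior mu0 sigma0 t in
    (forall th, qtilde sigma eta pol Y t q i k th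
                = normal_pdf (mutil W sigma eta pol Y prior t p i k)
                             (sigtil W sigma eta pol Y prior t p i k) th) /\
    (forall th, qseq W sigma eta pol Y prior t.+1 i k th
                = normal_pdf ((pseq W sigma eta pol Y prior mu0 sigma0 t.+1).1 i k)
                             ((pseq W sigma eta pol Y prior mu0 sigma0 t.+1).2 i k) th).
Proof.
move=> [hW [hrow _]] hsig heta hs0 prior t i k ht q p.
have [hq hp] := invariant R N K W sigma eta mu0 sigma0 pol Y hW hrow hsig heta hs0 t ht.
have h1 := fun j k => part1 R N K W sigma eta mu0 sigma0 pol Y hsig heta t j k _ (hq j k) (hp j k).
have h2 := fun j k => @part1a R N K W sigma eta mu0 sigma0 pol Y heta t j k _ (hp j k).
split; first exact: h1.
rewrite (qseqS R N K W sigma eta mu0 sigma0 pol Y t ht) (pseqS R N K W sigma eta mu0 sigma0 pol Y t ht).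
by have [] := part2 R N K W sigma eta mu0 sigma0 pol Y hW hrow t _ h1 h2 i k.
Qed.
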